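(* Let $\mathrm{sendMsg}:\mathbb{V}\times A\times\mathbb{V}\times A\times B\to(\mathbb{V}\times C)^{*}$ and $\odot:C\times C\to C$. If calls $\mathrm{reduceByKey}(\odot,\cdot)$ (on pair RDDs over $\mathbb{V}\times C$) have deterministic outcomes, then calls $\mathrm{aggregateMessages}(\mathrm{sendMsg},\odot,\mathit{graphRdd})$ have deterministic outcomes.
   Context: Lists are finite; $X^{*}$ denotes lists over $X$; $\mathrm{foldl}(f,b,[x_1,\dots,x_n])=f(\cdots f(f(b,x_1),x_2)\cdots,x_n)$ and $\mathrm{reducel}(f,[x_1,\dots,x_n])=\mathrm{foldl}(f,x_1,[x_2,\dots,x_n])$. An RDD is a list of lists (''partitions''); a pair RDD is an RDD of (key, value) pairs; $\mathrm{filterkey}(k,L)$ lists the values of pairs with key $k$ in $L$ in order. A partitioning of a list $L$ splits $L$ into consecutive pieces and permutes them. $\mathrm{reduceByKey}_{\mathrm{det}}(\odot,[q_1,\dots,q_m])$ returns a pair RDD containing each key $k$ occurring in some $q_i$ once, with value $\mathrm{reducel}(\odot,[c_{i_1},\dots,c_{i_r}])$ where $i_1<\dots<i_r$ are the indices of pieces containing $k$ and $c_i=\mathrm{reducel}(\odot,\mathrm{filterkey}(k,q_i))$; calls $\mathrm{reduceByKey}(\odot,\cdot)$ have deterministic outcomes if the value at every key $k$ occurring in $L$ of $\mathrm{reduceByKey}_{\mathrm{det}}(\odot,P(L))$ equals $\mathrm{reducel}(\odot,\mathrm{filterkey}(k,L))$ for all lists $L$ of pairs and partitionings $P$. Let $\mathbb{V}$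 be the set of vertex identifiers. A graph RDD with vertex attributes in $A$ and edge attributes in $B$ consists of a vertex RDD (an RDD over $\mathbb{V}\times A$ in which each vertex identifier appears at most once) and an edge RDD (an RDD over $\mathbb{V}\times\mathbb{V}\times B$ of triples (source, destination, attribute), multi-edges allowed), such that every endpoint of an edge appears in the vertex RDD; two graph RDDs represent the same graph if they have the same vertex pairs and the same multiset of edge triples, possibly partitioned and ordered differently. $\mathrm{aggregateMessages}(\mathrm{sendMsg},\odot,\mathit{graphRdd})$: replace each edge partition $[e_1,\dots,e_s]$ by the concatenation of the lists $\mathrm{sendMsg}(u,a_u,v,a_v,b)$ for $e_j=(u,v,b)$, where $a_u,a_v$ are the attributes of $u,v$ in the vertex RDD, obtaining a pair RDD over $\mathbb{V}\times C$, and apply $\mathrm{reduceByKey}(\odot,\cdot)$ to it (this last step being executed in a possibly non-deterministic order, as modeled by reduceByKey). Calls $\mathrm{aggregateMessages}(\mathrm{sendMsg},\odot,\mathit{graphRdd})$ have deterministic outcomes if for any two graph RDDs $g_1,g_2$ representing the same graph and every vertex identifier $v$, the value associated with $v$ in $\mathrm{aggregateMessages}(\mathrm{sendMsg},\odot,g_1)$ equals that in $\mathrm{aggregateMessages}(\mathrm{sendMsg},\odot,g_2)$. *)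

(* Defs.v *)
From mathcomp Require Import all_boot.
From Stdlib Require Permutation List.

Set Implicit Arguments.
Unset Strict Implicit.
Unset Printing Implicit Defensive.

(** An RDD is a list of partitions. *)
Definition rdd (X : Type) := seq (seq X).

Definition reducel {X : Type} (f : X -> X -> X) (s : seq X) : option X :=
  match s with
  | [::] => None
  | x :: s' => Some (foldl f x s')
  end.

Definition filterkey {K : eqType} {X : Type} (k : K) (L : seq (K * X)) : seq X :=
  [seq p.2 | p <- L & p.1 == k].

Fixpoint lookup {K : eqType} {X : Type} (k : K) (s : seq (K * X)) : option X :=
  match s with
  | [::] => None
  | (k', x) :: s' => if k' == k then Some x else lookup k s'
  end.

Definition partitioning {X : Type} (L : seq X) (P : rdd X) : Prop :=
  exists pieces : seq (seq X),
    flatten pieces = L /\ Permutation.Permutation pieces P.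

(** reduceByKey_det op [q1;...;qm]: each key k occurring in some q_i once,
    with value reducel op [c_{i1};...;c_{ir}], c_i = reducel op (filterkey k q_i),
    i1 < ... < ir the indices of pieces containing k.
    (The resulting pair RDD is returned as a flat list of pairs.) *)
Definition reduceByKey_det {K : eqType} {X : Type} (op : X -> X -> X)
    (P : rdd (K * X)) : seq (K * X) :=
  pmap (fun k => omap (fun c => (k, c))
                      (reducel op (pmap (fun q => reducel op (filterkey k q)) P)))
       (undup (map fst (flatten P))).

Definition reduceByKey_deterministic (K : eqType) {X : Type} (op : X -> X -> X) : Prop :=
  forall (L : seq (K * X)) (P : rdd (K * X)),
    partitioning L P ->
    forall k : K, k \in map fst L ->
      lookup k (reduceByKey_det op P) = reducel op (filterkey k L).

Record graphRDD (V : eqType) (A B : Type) := GraphRDD {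
  vertices : rdd (V * A);
  edges : rdd (V * V * B)
}.

Definition wf_graphRDD {V : eqType} {A B : Type} (g : graphRDD V A B) : Prop :=
  uniq (map fst (flatten (vertices g))) /\
  (forall e, List.In e (flatten (edges g)) ->
     e.1.1 \in map fst (flatten (vertices g)) /\
     e.1.2 \in map fst (flatten (vertices g))).

Definition same_graph {V : eqType} {A B : Type} (g1 g2 : graphRDD V A B) : Prop :=
  (forall p, List.In p (flatten (vertices g1)) <-> List.In p (flatten (vertices g2))) /\
  Permutation.Permutation (flatten (edges g1)) (flatten (edges g2)).

(** Messages sent along one edge (u,v,b): sendMsg(u,a_u,v,a_v,b). For
    well-formed graph RDDs both attribute lookups succeed. *)
Definition edge_msgs {V : eqType} {A B C : Type}
    (sendMsg : V -> A -> V -> A -> B -> seq (V * C))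
    (g : graphRDD V A B) (e : V * V * B) : seq (V * C) :=
  let: (u, v, b) := e in
  match lookup u (flatten (vertices g)), lookup v (flatten (vertices g)) with
  | Some au, Some av => sendMsg u au v av b
  | _, _ => [::]
  end.

Definition message_rdd {V : eqType} {A B C : Type}
    (sendMsg : V -> A -> V -> A -> B -> seq (V * C))
    (g : graphRDD V A B) : rdd (V * C) :=
  map (fun part => flatten (map (edge_msgs sendMsg g) part)) (edges g).

(** r is a possible outcome of aggregateMessages(sendMsg, op, g): reduceByKey
    applied to the message RDD, its partitions combined in an arbitrary order. *)
Definition aggregateMessages_outcome {V : eqType} {A B C : Type}
    (sendMsg : V -> A -> V -> A -> B -> seq (V * C)) (op : C -> C -> C)
    (g : graphRDD V A B) (r : seq (V * C)) : Prop :=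
  exists P : rdd (V * C),
    Permutation.Permutation (message_rdd sendMsg g) P /\ r = reduceByKey_det op P.

Definition aggregateMessages_deterministic {V : eqType} {A B C : Type}
    (sendMsg : V -> A -> V -> A -> B -> seq (V * C)) (op : C -> C -> C) : Prop :=
  forall g1 g2 : graphRDD V A B,
    wf_graphRDD g1 -> wf_graphRDD g2 -> same_graph g1 g2 ->
    forall r1 r2,
      aggregateMessages_outcome sendMsg op g1 r1 ->
      aggregateMessages_outcome sendMsg op g2 r2 ->
      forall v : V, lookup v r1 = lookup v r2.

(* Main.v *)
From Stdlib Require Import Permutation.
From Stdlib Require List.
Require Import Defs.
From mathcomp Require Import all_boot.

Set Implicit Arguments.
Unset Strict Implicit.

Lemma In_map_fst (K : eqType) (X : Type) (s : seq (K * X)) u a :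
  List.In (u, a) s -> u \in map fst s.
Proof.
elim: s => [|[k x] s IH] //= [[-> _]|H]; rewrite in_cons ?eqxx //.
by rewrite IH ?orbT.
Qed.

Lemma lookup_In (K : eqType) (X : Type) (s : seq (K * X)) u a :
  lookup u s = Some a -> List.In (u, a) s.
Proof.
elim: s => [|[k x] s IH] //=.
case: eqP => [-> [<-]|_ H]; [by left | by right; apply: IH].
Qed.

Lemma lookup_uniq (K : eqType) (X : Type) (s : seq (K * X)) u a :
  uniq (map fst s) -> List.In (u, a) s -> lookup u s = Some a.
Proof.
elim: s => [|[k x] s IH] //= /andP [Hk Hu] [[-> ->]|H].
  by rewrite eqxx.
case: eqP => [E|_]; last by apply: IH.
by subst k; rewrite (In_map_fst H) in Hk.
Qed.

Lemma lookup_same (K : eqType) (X : Type) (s1 s2 : seq (K * X)) :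
  uniq (map fst s1) -> uniq (map fst s2) ->
  (forall p, List.In p s1 <-> List.In p s2) ->
  forall u, lookup u s1 = lookup u s2.
Proof.
move=> U1 U2 H u.
case E1: (lookup u s1) => [a|].
  by symmetry; apply: lookup_uniq => //; apply/H/lookup_In.
case E2: (lookup u s2) => [b|] //.
have := lookup_uniq U1 (proj2 (H _) (lookup_In E2)).
by rewrite E1.
Qed.

Lemma perm_flatten (X : Type) (l1 l2 : seq (seq X)) :
  Permutation l1 l2 -> Permutation (flatten l1) (flatten l2).
Proof.
elim => //= [x l l' _ IH|x y l|l l' l'' _ IH1 _ IH2].
- exact: Permutation_app_head.
- rewrite !catA; apply: Permutation_app_tail; exact: Permutation_app_comm.
- exact: Permutation_trans IH1 IH2.
Qed.

Lemma perm_filter (X : Type) (p : pred X) (l1 l2 : seq X) :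
  Permutation l1 l2 -> Permutation (filter p l1) (filter p l2).
Proof.
elim => //= [x l l' _ IH|x y l|l l' l'' _ IH1 _ IH2].
- by case: (p x) => //; constructor.
- by case: (p x); case: (p y) => //; constructor.
- exact: Permutation_trans IH1 IH2.
Qed.

Lemma perm_mem (T : eqType) (l1 l2 : seq T) x :
  Permutation l1 l2 -> (x \in l1) = (x \in l2).
Proof.
elim => //= [a l l' _ IH|a b l|l l' l'' _ IH1 _ IH2].
- by rewrite !in_cons IH.
- by rewrite !in_cons orbCA.
- by rewrite IH1.
Qed.

Lemma lookup_pmap_none (K : eqType) (X : Type) (f : K -> option X) ks v :
  v \notin ks -> lookup v (pmap (fun k => omap (fun c => (k, c)) (f k)) ks) = None.
Proof.
elim: ks => [|k ks IH] //=; rewrite in_cons negb_or => /andP [Hk Hn].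
case: (f k) => [c|] /=; last exact: IH.
by rewrite eq_sym (negbTE Hk) IH.
Qed.

Lemma flatten_map_flatten (X Y : Type) (f : X -> seq Y) (es : seq (seq X)) :
  flatten (map (fun part => flatten (map f part)) es) = flatten (map f (flatten es)).
Proof.
elim: es => //= e es IH; by rewrite IH map_cat flatten_cat.
Qed.

Theorem proposition5 (V : eqType) (A B C : Type)
    (sendMsg : V -> A -> V -> A -> B -> seq (V * C)) (op : C -> C -> C) :
  reduceByKey_deterministic V op ->
  aggregateMessages_deterministic sendMsg op.
Proof.
move=> Hdet g1 g2 [U1 _] [U2 _] [Hv He] r1 r2 [P1 [HP1 ->]] [P2 [HP2 ->]] v.
have comm : forall x y, op x y = op y x.
  move=> x y.
  have H := Hdet [:: (v, x); (v, y)] [:: [:: (v, y)]; [:: (v, x)]] _ v.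
  have Hp : partitioning [:: (v, x); (v, y)] [:: [:: (v, y)]; [:: (v, x)]].
    exists [:: [:: (v, x)]; [:: (v, y)]]; split => //; exact: perm_swap.
  move: (H Hp); rewrite /reduceByKey_det /filterkey /= !eqxx /= mem_seq1 eqxx /= eqxx /= in_cons eqxx /=.
  by move=> H1; move: (H1 isT); rewrite ?eqxx => -[].
have assoc : forall x y z, op x (op y z) = op (op x y) z.
  move=> x y z.
  have H := Hdet [:: (v, x); (v, y); (v, z)] [:: [:: (v, x)]; [:: (v, y); (v, z)]] _ v.
  have Hp : partitioning [:: (v, x); (v, y); (v, z)] [:: [:: (v, x)]; [:: (v, y); (v, z)]].
    by exists [:: [:: (v, x)]; [:: (v, y); (v, z)]]; split.
  move: (H Hp); rewrite /reduceByKey_det /filterkey /= !eqxx /= !(in_cons, mem_seq1, eqxx) /= !eqxx /=.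
  by move=> H1; move: (H1 isT); rewrite ?eqxx => -[].
have red_perm : forall s1 s2, Permutation s1 s2 -> reducel op s1 = reducel op s2.
  have G : forall s1 s2, Permutation s1 s2 -> forall x, foldl op x s1 = foldl op x s2.
    move=> s1 s2; elim => [|a l l' _ IH|a b l|l l' l'' _ IH1 _ IH2] x0 /=.
    - by [].
    - by rewrite IH.
    - by rewrite -!assoc (comm a b).
    - by rewrite IH1.
  move=> s1 s2; elim => //= [a l l' Hp IH|a b l|l l' l'' _ IH1 _ IH2].
  - by rewrite (G _ _ Hp a).
  - by rewrite comm.
  - by rewrite IH1.
have Emsg : edge_msgs sendMsg g1 =1 edge_msgs sendMsg g2.
  move=> [[u w] b] /=.
  by rewrite !(lookup_same U1 U2 Hv).
set L1 := flatten (message_rdd sendMsg g1).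
set L2 := flatten (message_rdd sendMsg g2).
have PL : Permutation L1 L2.
  rewrite /L1 /L2 /message_rdd !flatten_map_flatten (eq_map Emsg).
  exact/perm_flatten/Permutation_map.
have part1 : partitioning L1 P1 by exists (message_rdd sendMsg g1).
have part2 : partitioning L2 P2 by exists (message_rdd sendMsg g2).
have none : forall L P, Permutation L P -> v \notin map fst (flatten L) ->
    lookup v (reduceByKey_det op P) = None.
  move=> L P HP Hn; apply: lookup_pmap_none.
  by rewrite mem_undup -(perm_mem _ (Permutation_map _ (perm_flatten HP))).
have M : (v \in map fst L1) = (v \in map fst L2).
  exact/perm_mem/Permutation_map.
case H1: (v \in map fst L1).
  rewrite (Hdet _ _ part1 _ H1) (Hdet L2 _ part2) -?M //.
  apply: red_perm; rewrite /filterkey; exact/Permutation_map/perm_filter.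
rewrite (none _ _ HP1) ?H1 // (none _ _ HP2) //.
by rewrite -/L2 -M H1.
Qed.
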